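(* For every integer $d\ge3$, the family of sets $(\mathsf U_{d,s})_{s\ge1}$ is not increasing with respect to inclusion: there exist integers $1\le s<t$ such that $\mathsf U_{d,s}\not\subseteq\mathsf U_{d,t}$.
   Context: For $U\in\mathcal U(ds)$ (unitary $ds\times ds$ matrices) viewed as a $d\times d$ block matrix with blocks $U_{ij}\in M_s(\mathbb C)$, $\phi_{d,s}(U)=\big(\tfrac1s\|U_{ij}\|_F^2\big)_{i,j=1}^d$ with $\|X\|_F=\operatorname{Tr}(XX^* )^{1/2}$, and $\mathsf U_{d,s}:=\phi_{d,s}(\mathcal U(ds))$. *)

(* Defs.v *)
From HB Require Import structures.
From mathcomp Require Import all_boot all_order all_algebra.
From mathcomp Require Import reals.
From mathcomp.real_closed Require Import complex.
Set Implicit Arguments. Unset Strict Implicit. Unset Printing Implicit Defensive.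
Import Order.TTheory GRing.Theory Num.Theory.
Local Open Scope ring_scope.

(* Complex numbers C := R[i] over an arbitrary realType R
   (any realType is isomorphic to the classical reals). *)

Section Defs.
Variable R : realType.
Local Notation C := (R[i])%type.

Definition adj_mx m n (A : 'M[C]_(m, n)) : 'M[C]_(n, m) :=
  \matrix_(i, j) (A j i)^*.

Definition unitary_mx n (U : 'M[C]_n) : Prop :=
  U *m adj_mx U = 1%:M /\ adj_mx U *m U = 1%:M.

Lemma block_idx_proof d s (i : 'I_d) (k : 'I_s) : (i * s + k < d * s)%N.
Proof.
have := ltn_ord i; have := ltn_ord k => hk hi.
apply: (@leq_trans (i * s + s)); first by rewrite ltn_add2l.
by rewrite -mulSnr leq_mul2r hi orbT.
Qed.

(* row/column index (i-1)s + k of the ds x ds matrix *)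
Definition block_idx d s (i : 'I_d) (k : 'I_s) : 'I_(d * s) :=
  Ordinal (block_idx_proof i k).

Definition block_of d s (U : 'M[C]_(d * s)) (i j : 'I_d) : 'M[C]_s :=
  \matrix_(k, l) U (block_idx i k) (block_idx j l).

Definition frob2 s (X : 'M[C]_s) : C := \tr (X *m adj_mx X).

Definition phi_ds d s (U : 'M[C]_(d * s)) : 'M[C]_d :=
  \matrix_(i, j) ((s%:R)^-1 * frob2 (block_of U i j)).

Definition Uset d s : 'M[C]_d -> Prop :=
  fun M => exists U : 'M[C]_(d * s), unitary_mx U /\ phi_ds U = M.

End Defs.

(* Main.v *)
Require Import Defs.
From HB Require Import structures.
From mathcomp Require Import all_boot all_order all_algebra.
From mathcomp Require Import reals.
From mathcomp.real_closed Require Import complex.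
From mathcomp Require Import zify.
Import Order.TTheory GRing.Theory Num.Theory.
Local Open Scope ring_scope.

Lemma nat_blk_eq (s j l i k : nat) : (l < s)%N -> (k < s)%N ->
  (j * s + l == i * s + k)%N = (j == i) && (l == k).
Proof.
move=> hl hk; apply/eqP/andP => [h|[/eqP -> /eqP ->]] //.
have s0 : (0 < s)%N by apply: leq_ltn_trans hl.
have h1 := congr1 (divn^~ s) h; have h2 := congr1 (modn^~ s) h.
move: h1 h2; rewrite !divnMDl // !modnMDl !divn_small // !modn_small // !addn0.
by move=> -> ->.
Qed.

Lemma bi_eq d s (i j : 'I_d) (k l : 'I_s) :
  (block_idx i k == block_idx j l) = (i == j) && (k == l).
Proof.
by rewrite -val_eqE /= nat_blk_eq.
Qed.

Lemma sum_blocks (T : nmodType) d s (F : 'I_(d * s) -> T) :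
  \sum_c F c = \sum_(i < d) \sum_(k < s) F (block_idx i k).
Proof.
rewrite pair_big /=.
have hb : bijective (fun p : 'I_d * 'I_s => block_idx p.1 p.2).
  apply: inj_card_bij; last by rewrite card_prod !card_ord.
  by move=> [i k] [j l] /= /eqP; rewrite bi_eq => /andP [/eqP -> /eqP ->].
by rewrite (reindex _ (onW_bij _ hb)).
Qed.

Lemma UadjU_block (R : realType) d s (U : 'M[R[i]]_(d * s)) i k i' k' :
  (U *m adj_mx U) (block_idx i k) (block_idx i' k') =
  \sum_j (block_of U i j *m adj_mx (block_of U i' j)) k k'.
Proof.
rewrite mxE sum_blocks; apply: eq_bigr => j _; rewrite mxE.
by apply: eq_bigr => l _; rewrite !mxE.
Qed.

Lemma adjUU_block (R : realType) d s (U : 'M[R[i]]_(d * s)) j l j' l' :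
  (adj_mx U *m U) (block_idx j l) (block_idx j' l') =
  \sum_i (adj_mx (block_of U i j) *m block_of U i j') l l'.
Proof.
rewrite mxE sum_blocks; apply: eq_bigr => i _; rewrite mxE.
by apply: eq_bigr => k _; rewrite !mxE.
Qed.

Lemma adj0 (R : realType) m n : adj_mx (0 : 'M[R[i]]_(m, n)) = 0.
Proof. by apply/matrixP => i j; rewrite !mxE conjC0. Qed.

Lemma frob2_eq0 (R : realType) s (X : 'M[R[i]]_s) : frob2 X = 0 -> X = 0.
Proof.
rewrite /frob2 /mxtrace => h.
have hd : forall k, (X *m adj_mx X) k k = \sum_l X k l * (X k l)^*.
  by move=> k; rewrite mxE; apply: eq_bigr => l _; rewrite !mxE.
have h1 : forall k, (X *m adj_mx X) k k = 0.
  move=> k; apply: (psumr_eq0P _ h) => // i _; rewrite hd; apply: sumr_ge0 => j _.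
  exact: mul_conjC_ge0.
apply/matrixP => k l; rewrite mxE.
have := h1 k.
rewrite hd => /psumr_eq0P h2.
have /eqP : X k l * (X k l)^* = 0 by apply: h2 => // j _; exact: mul_conjC_ge0.
by rewrite mul_conjC_eq0 => /eqP.
Qed.
Lemma tr_pid (F : fieldType) n r : (r <= n)%N -> \tr (pid_mx r : 'M[F]_n) = r%:R.
Proof.
move=> hr; rewrite /mxtrace.
transitivity (\sum_(i < n | (i < r)%N) (1 : F)).
  rewrite [RHS]big_mkcond /=; apply: eq_bigr => i _; rewrite !mxE eqxx /=.
  by case: (i < r)%N.
rewrite (eq_bigl (fun i : 'I_n => true && (i < r)%N)) // -(@big_ord_widen_cond F 0 +%R r n (fun _ => true) (fun _ => (1:F)) hr).
by rewrite sumr_const card_ord.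
Qed.

Lemma trace_idem (F : fieldType) n (P : 'M[F]_n) :
  P *m P = P -> \tr P = (\rank P)%:R.
Proof.
move=> hP.
have HP := mulmx_ebase P.
set r := \rank P in HP *; set L := col_ebase P in HP; set W := row_ebase P in HP.
have uL : L \in unitmx := col_ebase_unit P.
have uW : W \in unitmx := row_ebase_unit P.
have hr : (r <= n)%N := rank_leq_row P.
have key : pid_mx r *m (W *m L) *m pid_mx r = pid_mx r :> 'M_n.
  have e : L *m (pid_mx r *m (W *m L) *m pid_mx r) *m W = L *m pid_mx r *m W.
    by transitivity (P *m P); [rewrite -HP !mulmxA | rewrite hP HP].
  have := congr1 (fun X => invmx L *m (X *m invmx W)) e.
  by rewrite !mulmxK // -!mulmxA !mulKmx.
rewrite -HP mxtrace_mulC mulmxA mxtrace_mulC -(@pid_mx_id F n n n r hr) -mulmxA.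
rewrite mxtrace_mulC.
have -> : pid_mx r *m (W *m L) *m pid_mx r = pid_mx r :> 'M[F]_n by [].
by rewrite tr_pid.
Qed.

Definition Mex (R : realType) d : 'M[R[i]]_d :=
  \matrix_(i, j) if ((i < 3) && (j < 3))%N then
     (if (nat_of_ord i == nat_of_ord j) then 0 else 2^-1)
   else (nat_of_ord i == nat_of_ord j)%:R.

Lemma not_U3 (R : realType) d (hd : (3 <= d)%N) : ~ Uset 3 (Mex R d).
Proof.
move=> [U [[HU1 HU2] Hphi]].
have hz : forall i j, Mex R d i j = 0 -> block_of U i j = 0.
  move=> i j h; apply: frob2_eq0; move: h; rewrite -Hphi mxE => /eqP.
  by rewrite mulf_eq0 invr_eq0 pnatr_eq0 /= => /eqP.
have h0 : (0 < d)%N by lia.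
have h1 : (1 < d)%N by lia.
have h2 : (2 < d)%N by lia.
pose r0 : 'I_d := Ordinal h0.
pose r1 : 'I_d := Ordinal h1.
pose r2 : 'I_d := Ordinal h2.
have Z1 : forall j : 'I_d, j != r0 -> j != r1 -> block_of U r2 j = 0.
  move=> j; rewrite -!val_eqE /= => n0 n1; apply: hz; rewrite mxE /=.
  by case: j n0 n1 => [[|[|[|j]]] hj] //=.
have Z2 : forall i : 'I_d, i != r2 -> block_of U i r0 = 0 \/ block_of U i r1 = 0.
  move=> i; rewrite -!val_eqE /= => n2.
  case: i n2 => [[|[|[|i]]] hi] //= _; [left|right|left]; apply: hz; rewrite mxE //=.
set A := block_of U r2 r0.
set B := block_of U r2 r1.
have Ha : A *m adj_mx A + B *m adj_mx B = 1%:M.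
  apply/matrixP => k k'.
  have := congr1 (fun X : 'M[R[i]]_(d * 3) => X (block_idx r2 k) (block_idx r2 k')) HU1 => /=.
  rewrite UadjU_block [in RHS]mxE bi_eq eqxx /=.
  rewrite (bigD1 r0) // (bigD1 r1) //= big1 ?addr0; last first.
    by move=> j /andP [n1 n0]; rewrite Z1 // mul0mx mxE.
  by move=> h; rewrite [LHS]mxE [RHS]mxE -h.
have Hb : adj_mx A *m B = 0.
  apply/matrixP => l l'.
  have := congr1 (fun X : 'M[R[i]]_(d * 3) => X (block_idx r0 l) (block_idx r1 l')) HU2 => /=.
  rewrite adjUU_block [in RHS]mxE bi_eq /=.
  rewrite (bigD1 r2) // big1 ?addr0; last first.
    by move=> i /Z2 [->|->]; rewrite ?adj0 ?mul0mx ?mulmx0 mxE.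
  by move=> h; rewrite [RHS]mxE -[LHS]addr0; exact: h.
have Hc : frob2 A = 3%:R * 2^-1.
  have := congr1 (fun X : 'M[R[i]]_d => X r2 r0) Hphi => /=.
  rewrite !mxE /= => h.
  by rewrite -h mulrA mulfV ?mul1r // pnatr_eq0.
set P := A *m adj_mx A.
have hPQ : P *m (B *m adj_mx B) = 0.
  by rewrite /P -mulmxA (mulmxA (adj_mx A)) Hb mul0mx mulmx0.
have hP1 : P = 1%:M - B *m adj_mx B by rewrite -Ha addrK.
have hPP : P *m P = P by rewrite {2}hP1 mulmxBr mulmx1 hPQ subr0.
have := @trace_idem _ _ _ hPP.
have Ht : \tr P = frob2 A := erefl.
rewrite Ht Hc => h.
have : (3%:R : R[i]) = ((\rank P) * 2)%:R.
  by rewrite natrM -h mulfVK // pnatr_eq0.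
move/eqP; rewrite eqr_nat => /eqP; lia.
Qed.

Definition gn0 (i : nat) : nat :=
  match i with 0 => 1 | 1 => 2 | 2 => 0 | _ => i end%N.
Definition gn1 (i : nat) : nat :=
  match i with 0 => 2 | 1 => 0 | 2 => 1 | _ => i end%N.
Definition gn (k i : nat) := if k == 0%N then gn0 i else gn1 i.
Definition gi (k i : nat) := if k == 0%N then gn1 i else gn0 i.

Lemma gnK k i : gi k (gn k i) = i.
Proof. by rewrite /gi /gn; case: (k == 0%N); case: i => [|[|[|i]]]. Qed.
Lemma giK k i : gn k (gi k i) = i.
Proof. by rewrite /gi /gn; case: (k == 0%N); case: i => [|[|[|i]]]. Qed.

Lemma gn_lt d k i : (3 <= d)%N -> (i < d)%N -> (gn k i < d)%N.
Proof. by rewrite /gn; case: (k == 0%N); case: i => [|[|[|i]]] /=; lia. Qed.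
Lemma gi_lt d k i : (3 <= d)%N -> (i < d)%N -> (gi k i < d)%N.
Proof. by rewrite /gi; case: (k == 0%N); case: i => [|[|[|i]]] /=; lia. Qed.

Definition fn (c : nat) := (gn (c %% 2) (c %/ 2) * 2 + c %% 2)%N.
Definition fi (c : nat) := (gi (c %% 2) (c %/ 2) * 2 + c %% 2)%N.

Lemma dm2 (q m : nat) : (m < 2)%N -> ((q * 2 + m) %/ 2 = q /\ (q * 2 + m) %% 2 = m)%N.
Proof. by move=> hm; rewrite divnMDl // modnMDl divn_small // modn_small // addn0. Qed.

Lemma fnE (i k : nat) : (k < 2)%N -> fn (i * 2 + k) = (gn k i * 2 + k)%N.
Proof. by move=> hk; rewrite /fn; have [-> ->] := dm2 i k hk. Qed.

Lemma fiK c : fi (fn c) = c.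
Proof.
rewrite /fi /fn; have [-> ->] := dm2 (gn (c %% 2) (c %/ 2)) (c %% 2) (ltn_pmod c (isT : (0 < 2)%N)).
by rewrite gnK -divn_eq.
Qed.
Lemma fnK c : fn (fi c) = c.
Proof.
rewrite /fi /fn; have [-> ->] := dm2 (gi (c %% 2) (c %/ 2)) (c %% 2) (ltn_pmod c (isT : (0 < 2)%N)).
by rewrite giK -divn_eq.
Qed.

Lemma fn_lt d c : (3 <= d)%N -> (c < d * 2)%N -> (fn c < d * 2)%N.
Proof.
move=> hd hc; rewrite /fn.
have h1 : (c %/ 2 < d)%N by rewrite ltn_divLR.
have := @gn_lt d (c %% 2) _ hd h1; have := ltn_pmod c (isT : (0 < 2)%N); lia.
Qed.
Lemma fi_lt d c : (3 <= d)%N -> (c < d * 2)%N -> (fi c < d * 2)%N.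
Proof.
move=> hd hc; rewrite /fi.
have h1 : (c %/ 2 < d)%N by rewrite ltn_divLR.
have := @gi_lt d (c %% 2) _ hd h1; have := ltn_pmod c (isT : (0 < 2)%N); lia.
Qed.

Definition Uex (R : realType) d : 'M[R[i]]_(d * 2) :=
  \matrix_(a, b) ((nat_of_ord b == fn a)%:R).

Lemma Uex_unitary (R : realType) d (hd : (3 <= d)%N) : unitary_mx (Uex R d).
Proof.
split; apply/matrixP => a b; rewrite !mxE.
- pose c0 : 'I_(d * 2) := Ordinal (@fn_lt d _ hd (ltn_ord a)).
  rewrite (bigD1 c0) //= big1 ?addr0; last first.
    move=> c hc; rewrite !mxE; suff /negPf -> : nat_of_ord c != fn a by rewrite mul0r.
    by apply: contra hc => /eqP h; apply/eqP/val_inj.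
  rewrite !mxE eqxx conjC_nat mul1r; congr (_%:R).
  by rewrite (inj_eq (can_inj fiK)).
- pose c0 : 'I_(d * 2) := Ordinal (@fi_lt d _ hd (ltn_ord a)).
  rewrite (bigD1 c0) //= big1 ?addr0; last first.
    move=> c hc; rewrite !mxE; suff /negPf -> : nat_of_ord a != fn c by rewrite conjC0 mul0r.
    apply: contra hc => /eqP h; apply/eqP/val_inj => /=.
    by rewrite h fiK.
  rewrite !mxE fnK eqxx conjC1 mul1r; congr (_%:R).
  by rewrite eq_sym.
Qed.

Lemma frob_Uex (R : realType) d (i j : 'I_d) :
  frob2 (block_of (Uex R d) i j) = (nat_of_ord j == gn0 i)%:R + (nat_of_ord j == gn1 i)%:R.
Proof.
rewrite /frob2 /mxtrace.
transitivity (\sum_(k < 2) ((nat_of_ord j == gn k i)%:R : R[i])).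
  apply: eq_bigr => k _; rewrite mxE (bigD1 k) //= big1 ?addr0; last first.
    move=> l hl; rewrite !mxE /= fnE // nat_blk_eq //.
    by rewrite val_eqE (negPf hl) andbF conjC0 mulr0.
  rewrite !mxE /= fnE // nat_blk_eq // eqxx andbT conjC_nat -natrM.
  by case: (_ == _).
by rewrite big_ord_recr big_ord_recr big_ord0 /= add0r.
Qed.

Lemma Uex_phi (R : realType) d (hd : (3 <= d)%N) : phi_ds (Uex R d) = Mex R d.
Proof.
apply/matrixP => i j; rewrite !mxE frob_Uex -natrD.
have h2 : (2%:R : R[i]) != 0 by rewrite pnatr_eq0.
case: i => [[|[|[|i]]] hi]; case: j => [[|[|[|j]]] hj] /=;
  rewrite ?mulr0n ?mulr0 ?mulr1n ?mulr1 ?mulVf //.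
rewrite eq_sym; case: (_ == _) => /=; rewrite ?mulr0n ?mulr0 ?mulVf //.
Qed.

Theorem corollary3p14 (R : realType) (d : nat) (hd : (3 <= d)%N) :
  exists s t : nat, [/\ (1 <= s)%N, (s < t)%N &
    ~ (forall M : 'M[R[i]]_d, Uset s M -> Uset t M)].
Proof.
exists 2%N, 3%N; split => // H.
apply: (@not_U3 R d hd); apply: H.
exists (Uex R d); split; [exact: (@Uex_unitary R d hd) | exact: (@Uex_phi R d hd)].
Qed.
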